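(* Let $p$ be a strictly monotone lattice norm on $\mathbb{R}^2$ with $p((1,0))=p((0,1))=1$, and let $\Phi$ be an Orlicz function. If $x,y\in L^\Phi(\mu)$ satisfy $0\le x\le y$ and $\|y\|_{\Phi,p}=1$, then $$\|y-x\|_{\Phi,p}\le 1-\delta_{m,p}\big(I_\Phi(x)\big),$$ where $\delta_{m,p}$ is the modulus of monotonicity of $(\mathbb{R}^2,p)$.
   Context: $(\Omega,\Sigma,\mu)$ is a $\sigma$-finite complete measure space, $L^0$ the space of (classes of a.e. equal) real measurable functions, ordered pointwise a.e. An Orlicz function is a function $\Phi:\mathbb{R}\to[0,\infty)$ which is convex, even, vanishes at $0$ and is not identically zero. $I_\Phi(x)=\int_\Omega\Phi(x(t))\,d\mu\in[0,+\infty]$; $L^\Phi(\mu)=\{x\in L^0: I_\Phi(\lambda x)<\infty\text{ for some }\lambda>0\}$. A lattice norm on $\mathbb{R}^2$ is a norm $p$ with $p((u,v))\le p((u',v'))$ whenever $|u|\le|u'|,|v|\le|v'|$; it is strictly monotone if $0\le X\le Y$ coordinatewise and $X\ne Y$ imply $p(X)<p(Y)$. $\|x\|_{\Phi,p}=\inf_{k>0}\frac1k p((1,I_\Phi(kx)))$ with the convention $p((1,+\infty))=+\infty$. The modulus of monotonicity of $(\mathbb{R}^2,p)$ is $\delta_{m,p}(\varepsilon)=\inf\{1-p(Y-X): X,Y\in\mathbb{R}^2,\ 0\le X\le Y \text{ coordinatewise},\ p(X)\ge\varepsilon,\ p(Y)=1\}$ for $\varepsilon\in(0,1]$, and $\delta_{m,p}(0)=0$.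 (One has $I_\Phi(x)\in[0,1]$ under the hypotheses.) *)

(* Defs.v *)
From HB Require Import structures.
From mathcomp Require Import all_boot all_order all_algebra.
From mathcomp Require Import all_classical all_reals all_analysis.
Set Implicit Arguments. Unset Strict Implicit. Unset Printing Implicit Defensive.
Import Order.TTheory GRing.Theory Num.Theory.
Local Open Scope classical_set_scope.
Local Open Scope ring_scope.

Definition orlicz_function (R : realType) (Phi : R -> R) : Prop :=
  [/\ (forall u, 0 <= Phi u),
      (forall u v (t : R), 0 <= t <= 1 ->
          Phi (t * u + (1 - t) * v) <= t * Phi u + (1 - t) * Phi v),
      (forall u, Phi (- u) = Phi u),
      Phi 0 = 0 &
      exists u, Phi u != 0].

Definition lattice_norm (R : realType) (p : R * R -> R) : Prop :=
  [/\ (forall X, p X = 0 -> X = (0, 0)),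
      (forall (a : R) X, p (a * X.1, a * X.2) = `|a| * p X),
      (forall X Y, p (X.1 + Y.1, X.2 + Y.2) <= p X + p Y) &
      (forall u v u' v', `|u| <= `|u'| -> `|v| <= `|v'| -> p (u, v) <= p (u', v'))].

Definition coord_le (R : realType) (X Y : R * R) : Prop :=
  X.1 <= Y.1 /\ X.2 <= Y.2.

Definition strictly_monotone (R : realType) (p : R * R -> R) : Prop :=
  forall X Y, coord_le (0, 0) X -> coord_le X Y -> X <> Y -> p X < p Y.

Definition I_Phi (R : realType) d (T : measurableType d)
    (mu : {measure set T -> \bar R}) (Phi : R -> R) (x : T -> R) : \bar R :=
  (\int[mu]_t (Phi (x t))%:E)%E.

Definition in_LPhi (R : realType) d (T : measurableType d)
    (mu : {measure set T -> \bar R}) (Phi : R -> R) (x : T -> R) : Prop :=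
  measurable_fun setT x /\
  exists lam : R, 0 < lam /\ (I_Phi mu Phi (fun t => (lam * x t)%R) < +oo)%E.

(* (1/k) p((1, I_Phi(kx))), with the convention p((1,+oo)) = +oo. *)
Definition orlicz_term (R : realType) d (T : measurableType d)
    (mu : {measure set T -> \bar R}) (Phi : R -> R) (p : R * R -> R)
    (x : T -> R) (k : R) : \bar R :=
  match I_Phi mu Phi (fun t => k * x t) with
  | EFin r => (k^-1 * p (1, r))%:E
  | _ => +oo%E
  end.

Definition orlicz_pnorm (R : realType) d (T : measurableType d)
    (mu : {measure set T -> \bar R}) (Phi : R -> R) (p : R * R -> R)
    (x : T -> R) : \bar R :=
  ereal_inf [set orlicz_term mu Phi p x k | k in [set k : R | 0 < k]].

Definition delta_m (R : realType) (p : R * R -> R) (eps : R) : R :=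
  if eps == 0 then 0 else
  inf [set r : R | exists X Y : R * R,
        [/\ coord_le (0, 0) X, coord_le X Y, eps <= p X, p Y = 1 &
            r = 1 - p (Y.1 - X.1, Y.2 - X.2)]].

(* Main.v *)
Require Import Defs.
From HB Require Import structures.
From mathcomp Require Import all_boot all_order all_algebra.
From mathcomp Require Import all_classical all_reals all_analysis.
From mathcomp Require Import measurable_realfun ring lra.
Import Order.TTheory GRing.Theory Num.Theory numFieldNormedType.Exports.
Local Open Scope classical_set_scope.
Local Open Scope ring_scope.

Section PNorm.
Context {R : realType} {p : R * R -> R}.
Hypothesis hp : lattice_norm p.
Hypothesis p10 : p (1, 0) = 1.
Hypothesis p01 : p (0, 1) = 1.

Lemma pZ a u v : p (a * u, a * v) = `|a| * p (u, v).
Proof. by case: hp => _ h _ _; exact: (h a (u, v)). Qed.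

Lemma pD u1 v1 u2 v2 : p (u1 + u2, v1 + v2) <= p (u1, v1) + p (u2, v2).
Proof. by case: hp => _ _ h _; exact: (h (u1, v1) (u2, v2)). Qed.

Lemma pmono u v u' v' : `|u| <= `|u'| -> `|v| <= `|v'| -> p (u, v) <= p (u', v').
Proof. by case: hp => _ _ _ h; exact: h. Qed.

Lemma pmono0 u v u' v' : 0 <= u <= u' -> 0 <= v <= v' -> p (u, v) <= p (u', v').
Proof.
move=> /andP[u0 uu] /andP[v0 vv]; apply: pmono.
- by rewrite !ger0_norm // (le_trans u0).
- by rewrite !ger0_norm // (le_trans v0).
Qed.

Lemma pu0 u : 0 <= u -> p (u, 0) = u.
Proof. by move=> u0; have := pZ u 1 0; rewrite mulr1 mulr0 p10 mulr1 ger0_norm. Qed.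

Lemma p0v v : 0 <= v -> p (0, v) = v.
Proof. by move=> v0; have := pZ v 0 1; rewrite mulr1 mulr0 p01 mulr1 ger0_norm. Qed.

Lemma pge0 u v : 0 <= p (u, v).
Proof.
have := pD u v (- u) (- v); rewrite !subrr.
have -> : p (0, 0) = 0 by have := pZ 0 0 0; rewrite mul0r normr0 mul0r.
have -> : p (- u, - v) = p (u, v).
  by have := pZ (-1) u v; rewrite !mulN1r normrN normr1 mul1r.
lra.
Qed.

Lemma pconv a b u1 v1 u2 v2 : 0 <= a -> 0 <= b ->
  p (a * u1 + b * u2, a * v1 + b * v2) <= a * p (u1, v1) + b * p (u2, v2).
Proof.
move=> a0 b0; apply: le_trans (pD _ _ _ _) _.
by rewrite !pZ !ger0_norm.
Qed.

Lemma pkey w1 w2 t : 0 <= w1 -> 0 <= w2 -> 0 <= t ->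
  p (p (w1, w2), t) <= p (w1, w2 + t).
Proof.
move=> w10 w20 t0.
set P := p (w1, w2); set Q := p (w1, w2 + t).
have [st0|st0] := eqVneq (w2 + t) 0.
  have w0 : w2 = 0 by lra.
  have t00 : t = 0 by lra.
  by rewrite /P /Q w0 t00 addr0 (pu0 _ w10) (pu0 _ w10).
have st : 0 < w2 + t by rewrite lt_def st0 addr_ge0.
have HP : (w2 + t) * P <= t * w1 + w2 * Q.
  have := pconv (t / (w2 + t)) (w2 / (w2 + t)) w1 0 w1 (w2 + t)
            (divr_ge0 t0 (ltW st)) (divr_ge0 w20 (ltW st)).
  rewrite mulr0 add0r (pu0 _ w10) -/Q.
  have -> : t / (w2 + t) * w1 + w2 / (w2 + t) * w1 = w1.
    by rewrite -mulrDl -mulrDl [t + w2]addrC divff ?mul1r // gt_eqF.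
  have -> : w2 / (w2 + t) * (w2 + t) = w2 by rewrite divfK // gt_eqF.
  rewrite -/P => h.
  apply: (le_trans (ler_wpM2l (ltW st) h)).
  by rewrite le_eqVlt; apply/orP; left; apply/eqP; field.
have HQ : 0 <= Q by exact: pge0.
have HQ' : P <= Q by rewrite /P /Q; apply: pmono0; lra.
have P0 : 0 <= P by exact: pge0.
apply: le_trans (_ : p (w2 / (w2 + t) * Q + t / (w2 + t) * w1,
                      w2 / (w2 + t) * 0 + t / (w2 + t) * (w2 + t)) <= _).
  apply: pmono0.
    apply/andP; split => //.
    rewrite -(ler_pM2l st) (_ : (w2 + t) * (_ + _) = w2 * Q + t * w1); first lra.
    by field.
  rewrite mulr0 add0r divfK ?gt_eqF //; apply/andP; split => //.
apply: le_trans (pconv _ _ _ _ _ _ _ _) _.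
- exact: divr_ge0 (ltW st).
- exact: divr_ge0 (ltW st).
rewrite (pu0 _ HQ) -/Q.
by rewrite le_eqVlt; apply/orP; left; apply/eqP; field.
Qed.

Lemma pshift n e s eta : 0 <= n -> 0 <= s -> 0 <= e -> 0 <= eta -> e - eta <= s ->
  p (n, e) <= p (n, s) + eta.
Proof.
move=> n0 s0 e0 et0 hs.
have [se|es] := lerP e s.
  have : p (n, e) <= p (n, s) by apply: pmono0; rewrite ?lexx ?n0 ?e0 ?se.
  lra.
have h0 : p (0, e - s) = e - s by apply: p0v; lra.
have := pD n s 0 (e - s); rewrite addr0 (addrC s) subrK h0.
lra.
Qed.
End PNorm.

Section PhiSec.
Context {R : realType} {Phi : R -> R}.
Hypothesis hPhi : orlicz_function Phi.

Lemma Phi_ge0 u : 0 <= Phi u. Proof. by case: hPhi. Qed.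
Lemma Phi0 : Phi 0 = 0. Proof. by case: hPhi. Qed.
Lemma PhiN u : Phi (- u) = Phi u. Proof. by case: hPhi. Qed.
Lemma Phi_conv u v t : 0 <= t <= 1 ->
  Phi (t * u + (1 - t) * v) <= t * Phi u + (1 - t) * Phi v.
Proof. by case: hPhi => _ h _ _ _; exact: h. Qed.

Lemma Phi_sub t u : 0 <= t <= 1 -> Phi (t * u) <= t * Phi u.
Proof. by move=> ht; have := Phi_conv u 0 _ ht; rewrite mulr0 addr0 Phi0 mulr0 addr0. Qed.

Lemma Phi_abs u : Phi `|u| = Phi u.
Proof. by case: (ler0P u) => _ //; rewrite PhiN. Qed.

Lemma Phi_mono0 a b : 0 <= a -> a <= b -> Phi a <= Phi b.
Proof.
move=> a0 ab; have [b0|b0] := eqVneq b 0.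
  by rewrite b0 in ab *; have -> : a = 0 by lra.
have bp : 0 < b by rewrite lt_def b0 (le_trans a0 ab).
have hab : 0 <= a / b <= 1 by rewrite divr_ge0 ?(ltW bp) //= ler_pdivrMr // mul1r.
have := Phi_sub _ b hab; rewrite divfK //.
move=> h; apply: le_trans h _.
have := Phi_ge0 b; case/andP: hab => _ h1 h2.
by rewrite -[leRHS]mul1r ler_wpM2r.
Qed.

Lemma Phi_mono u v : `|u| <= `|v| -> Phi u <= Phi v.
Proof. by move=> h; rewrite -Phi_abs -(Phi_abs v); apply: Phi_mono0. Qed.

Lemma Phi_superadd a b : 0 <= a -> a <= b -> Phi a + Phi (b - a) <= Phi b.
Proof.
move=> a0 ab; have [b0|b0] := eqVneq b 0.
  have a00 : a = 0 by lra.
  by rewrite b0 a00 subrr Phi0 addr0.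
have bp : 0 < b by rewrite lt_def b0 (le_trans a0 ab).
have h1 : 0 <= a / b <= 1 by rewrite divr_ge0 ?(ltW bp) //= ler_pdivrMr // mul1r.
have h2 : 0 <= (b - a) / b <= 1.
  by rewrite divr_ge0 ?(ltW bp) ?subr_ge0 //= ler_pdivrMr // mul1r; lra.
have := Phi_sub _ b h1; have := Phi_sub _ b h2; rewrite !divfK ?gt_eqF //.
move=> H2 H1; apply: le_trans (lerD H1 H2) _.
by rewrite -mulrDl -mulrDl addrC subrK divff ?gt_eqF // mul1r.
Qed.

Lemma Phi_scale k u : 1 <= k -> k * Phi u <= Phi (k * u).
Proof.
move=> k1; have kp : 0 < k by lra.
have h : 0 <= k^-1 <= 1 by rewrite invr_ge0 (ltW kp) /= invf_le1.
have := Phi_sub _ (k * u) h; rewrite mulrA mulVf ?gt_eqF // mul1r => H.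
have kip : 0 < k^-1 by rewrite invr_gt0.
by rewrite -(ler_pM2l kip) mulrA mulVf ?gt_eqF // mul1r.
Qed.

Lemma Phi_lower k u : 0 <= k <= 1 -> Phi u - (1 - k) * (Phi (2 * u) - Phi u) <= Phi (k * u).
Proof.
move=> /andP[k0 k1].
have h : 0 <= (2 - k)^-1 <= 1.
  by rewrite invr_ge0 /= ?invf_le1; lra.
have := Phi_conv (k * u) (2 * u) _ h.
have -> : (2 - k)^-1 * (k * u) + (1 - (2 - k)^-1) * (2 * u) = u.
  by field; lra.
move=> H.
have kp : 0 < 2 - k by lra.
have := ler_wpM2l (ltW kp) H.
have -> : (2 - k) * ((2 - k)^-1 * Phi (k * u) + (1 - (2 - k)^-1) * Phi (2 * u))
          = Phi (k * u) + (1 - k) * Phi (2 * u) by field; lra.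
lra.
Qed.

Lemma Phi_measurable : measurable_fun setT Phi.
Proof.
pose g := fun u : R => Phi (Num.max u 0).
have -> : Phi = g \o Num.norm.
  apply/funext => u /=; rewrite /g max_l ?Phi_abs //.
apply: measurableT_comp; last exact: measurable_realfun.normr_measurable.
apply: nondecreasing_measurable => // a b ab; rewrite /g.
apply: Phi_mono0; first by rewrite le_max lexx orbT.
by rewrite le_max !ge_max ab lexx /= ?le_max ?lexx ?orbT; case: (lerP 0 b) => //; lra.
Qed.

End PhiSec.

Section Integ.
Local Open Scope ereal_scope.
Context {R : realType} {d : measure_display} {T : measurableType d}
  {mu : {measure set T -> \bar R}} {Phi : R -> R}.
Hypothesis hPhi : orlicz_function Phi.

Lemma mPhiE (f : T -> R) (k : R) : measurable_fun setT f ->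
  measurable_fun setT (fun t => (Phi (k * f t))%:E).
Proof.
move=> mf; apply/measurable_EFinP.
apply: measurableT_comp; first exact: Phi_measurable.
by apply: measurable_funM => //; exact: measurable_cst.
Qed.

Lemma Ie_ge0 f : 0 <= I_Phi mu Phi f.
Proof. by apply: integral_ge0 => t _; rewrite lee_fin Phi_ge0. Qed.

Lemma I1 (x y : T -> R) (k : R) : measurable_fun setT x -> measurable_fun setT y ->
  (0 <= k)%R ->
  {ae mu, forall t, (0 <= x t <= y t)%R} ->
  I_Phi mu Phi (fun t => k * (y t - x t))%R + I_Phi mu Phi (fun t => k * x t)%R
    <= I_Phi mu Phi (fun t => k * y t)%R.
Proof.
move=> mx my k0 hae; rewrite /I_Phi.
have mxy : measurable_fun setT (fun t => y t - x t)%R.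
  exact: measurable_funB.
rewrite -ge0_integralD //; try (by move=> t _; rewrite lee_fin Phi_ge0); try exact: (mPhiE (fun t => y t - x t)%R k mxy); try exact: (mPhiE x k mx).
apply: ae_ge0_le_integral => //.
- by move=> t _; rewrite adde_ge0 // lee_fin Phi_ge0.
- by apply: emeasurable_funD; [exact: (mPhiE (fun t => y t - x t)%R k mxy)|exact: (mPhiE x k mx)].
- by move=> t _; rewrite lee_fin Phi_ge0.
- exact: (mPhiE y k my).
apply: filterS hae => t /andP[x0 xy] _.
rewrite -EFinD lee_fin addrC.
have := Phi_superadd hPhi _ _ (mulr_ge0 k0 x0) (ler_wpM2l k0 xy).
by rewrite -mulrBr.
Qed.

Lemma I2 (x : T -> R) (k : R) : measurable_fun setT x -> (1 <= k)%R ->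
  k%:E * I_Phi mu Phi x <= I_Phi mu Phi (fun t => k * x t)%R.
Proof.
move=> mx k1.
have k0 : (0 <= k)%R by apply: le_trans k1.
have m1 : measurable_fun setT (fun t => (Phi (x t))%:E).
  by have := mPhiE x 1 mx; under eq_fun do rewrite mul1r.
rewrite /I_Phi -ge0_integralZl_EFin //; last by move=> t _; rewrite lee_fin Phi_ge0.
apply: ge0_le_integral => //.
- by move=> t _; rewrite mule_ge0 // lee_fin ?Phi_ge0.
- exact: measurable_funeM.
- exact: (mPhiE x k mx).
by move=> t _; rewrite -EFinM lee_fin Phi_scale.
Qed.

Lemma I3 (x : T -> R) (k0 k : R) : measurable_fun setT x -> (`|k0| <= `|k|)%R ->
  I_Phi mu Phi (fun t => k0 * x t)%R <= I_Phi mu Phi (fun t => k * x t)%R.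
Proof.
move=> mx kk; apply: ge0_le_integral => //;
  try (by move=> t _; rewrite lee_fin Phi_ge0);
  try exact: (mPhiE x k0 mx); try exact: (mPhiE x k mx).
by move=> t _; rewrite lee_fin; apply: Phi_mono => //; rewrite !normrM ler_wpM2r.
Qed.

Lemma I4 (x : T -> R) (e eta : R) : measurable_fun setT x ->
  I_Phi mu Phi x = e%:E -> (0 < eta)%R ->
  exists k0 : R, (0 < k0 < 1)%R /\ (e - eta)%:E <= I_Phi mu Phi (fun t => k0 * x t)%R.
Proof.
move=> mx Ie eta0.
pose kk (n : nat) : R := (1 - n.+2%:R^-1)%R.
have kk01 n : (0 < kk n < 1)%R.
  rewrite /kk; have h1 : (0 < n.+2%:R^-1 :> R)%R by rewrite invr_gt0.
  have h2 : (n.+2%:R^-1 < 1 :> R)%R by rewrite invf_lt1 // ltr1n.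
  by apply/andP; split; [rewrite subr_gt0|rewrite ltrBlDr ltrDl].

pose g n t := (Phi (kk n * x t))%:E.
have mg n : measurable_fun setT (g n) by exact: mPhiE x (kk n) mx.
have g0 n t : setT t -> 0 <= g n t by move=> _; rewrite lee_fin Phi_ge0.
have kk_nd m n : (m <= n)%N -> (kk m <= kk n)%R.
  move=> mn; rewrite /kk; suff : (n.+2%:R^-1 <= m.+2%:R^-1 :> R)%R by move=> h; rewrite lerD2l lerN2.
  by rewrite lef_pV2 ?posrE ?ltr0n // ler_nat ltnS ltnS.
have ndg t : setT t -> {homo g^~ t : n m / (n <= m)%N >-> n <= m}.
  move=> _ m n mn; rewrite /g lee_fin; apply: Phi_mono => //.
  have := kk_nd _ _ mn; have := kk01 m; have := kk01 n => /andP[a _] /andP[b _] h.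
  by rewrite !normrM ler_wpM2r // !ger0_norm // ltW.
have glim t : limn (g^~ t) = (Phi (x t))%:E.
  set u := x t; set C := (Phi (2 * u) - Phi u)%R.
  have C0 : (0 <= C)%R.
    rewrite /C subr_ge0; apply: Phi_mono => //.
    by rewrite normrM (ger0_norm (_ : (0 <= 2 :> R)%R)) //; have := normr_ge0 u; lra.
  have hcv : (fun n => Phi (kk n * u)) @ \oo --> Phi u.
    apply: (@squeeze_cvgr _ _ _ _ (fun n => Phi u - C * harmonic n)%R (fun=> Phi u)).
    - apply: nearW => n; apply/andP; split.
      + have hk : (0 <= kk n <= 1)%R.
          by have := kk01 n; move=> /andP[a b]; rewrite ltW // ltW.
        apply: le_trans (Phi_lower hPhi _ u hk); rewrite -/C.
        have h : (1 - kk n <= harmonic n)%R.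
          rewrite /kk /harmonic opprB addrC subrK lef_pV2 ?posrE ?ltr0n // ler_nat; exact: leqnSn.
        by have := ler_wpM2l C0 h; nra.
      + apply: Phi_mono => //; rewrite normrM ler_piMl //.
        by have := kk01 n; move=> /andP[a b]; rewrite ger0_norm ?ltW.
    - have := cvgB (cvg_cst (Phi u)) (cvgMr (a := C) (@cvg_harmonic R)).
      rewrite mulr0 subr0 => h; eapply h; typeclasses eauto.
    - exact: cvg_cst.
  have -> : g^~ t = EFin \o (fun n => Phi (kk n * u)) by [].
  rewrite EFin_lim; last by apply/cvg_ex; exists (Phi u).
  by rewrite (cvg_lim _ hcv).
have MC := monotone_convergence mu measurableT mg g0 ndg.
have E : \int[mu]_(t in setT) (fun x0 => limn (g^~ x0)) t = e%:E.
  by rewrite -Ie /I_Phi; apply: eq_integral => t _; exact: glim.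
rewrite E in MC.
have nd : {homo (fun n => \int[mu]_(t in setT) g n t) : n m / (n <= m)%N >-> n <= m}.
  move=> m n mn; apply: ge0_le_integral => //; try exact: g0; try exact: mg.
  by move=> t _; exact: ndg.
have lt : (e - eta)%:E < limn (fun n => \int[mu]_(t in setT) g n t).
  by rewrite -MC lte_fin; lra.
have := lte_lim nd (ereal_nondecreasing_is_cvgn nd) lt.
case=> N _ HN; exists (kk N); split; first exact: kk01.
exact: (HN N (leqnn N)).
Qed.

End Integ.

Theorem theorem7 (R : realType) (d : measure_display) (T : measurableType d)
    (mu : {measure set T -> \bar R})
    (mu_sfin : sigma_finite setT mu) (mu_compl : measure_is_complete mu)
    (p : R * R -> R) (Phi : R -> R) (x y : T -> R) :
  lattice_norm p -> strictly_monotone p -> p (1, 0) = 1 -> p (0, 1) = 1 ->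
  orlicz_function Phi ->
  in_LPhi mu Phi x -> in_LPhi mu Phi y ->
  {ae mu, forall t, 0 <= x t <= y t} ->
  orlicz_pnorm mu Phi p y = 1%E ->
  (orlicz_pnorm mu Phi p (fun t => (y t - x t)%R)
     <= (1 - delta_m p (fine (I_Phi mu Phi x)))%:E)%E.
Proof.
move=> hp _ p10 p01 hPhi [mx _] [my _] hae hy.
set N := orlicz_pnorm mu Phi p (fun t => (y t - x t)%R).
have good : forall eps : R, 0 < eps -> exists k r : R,
    [/\ 0 < k, I_Phi mu Phi (fun t => k * y t) = r%:E & k^-1 * p (1, r) < 1 + eps].
  move=> eps eps0.
  have : (ereal_inf [set orlicz_term mu Phi p y k | k in [set k : R | (0 < k)%R]]
            < (1 + eps)%:E)%E.
    by move: hy; rewrite /orlicz_pnorm => ->; rewrite lte_fin; lra.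
  case/ereal_inf_lt => z [k k0 <-]; rewrite /orlicz_term.
  case E: (I_Phi mu Phi (fun t => k * y t)) => [r| |] //.
  by rewrite lte_fin => h; exists k, r.
have key : forall k r : R, 0 < k -> I_Phi mu Phi (fun t => k * y t) = r%:E ->
    exists a c : R, [/\ I_Phi mu Phi (fun t => k * (y t - x t)) = a%:E,
      I_Phi mu Phi (fun t => k * x t) = c%:E, 0 <= a, 0 <= c & a + c <= r].
  move=> k r k0 Er.
  have := I1 (mu := mu) hPhi x y k mx my (ltW k0) hae; rewrite Er.
  have ha := Ie_ge0 (mu := mu) (Phi := Phi) hPhi (fun t => k * (y t - x t)).
  have hc := Ie_ge0 (mu := mu) (Phi := Phi) hPhi (fun t => k * x t).
  case: (I_Phi mu Phi (fun t => k * (y t - x t))) ha => [a| |] // ha;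
  case: (I_Phi mu Phi (fun t => k * x t)) hc => [c| |] // hc.
  by rewrite -EFinD lee_fin => h; exists a, c; split => //; rewrite -lee_fin.
have N0 : (0 <= N)%E.
  apply: le_ereal_inf_tmp => z [k k0 <-]; rewrite /orlicz_term.
  case: (I_Phi mu Phi _) => [r| |] //=.
  by rewrite lee_fin; apply: mulr_ge0; [rewrite invr_ge0 ltW|exact: pge0].
have Nle : forall k a : R, 0 < k -> I_Phi mu Phi (fun t => k * (y t - x t)) = a%:E ->
    (N <= (k^-1 * p (1, a))%:E)%E.
  move=> k a k0 Ea; apply: ereal_inf_lbound; exists k => //.
  by rewrite /orlicz_term Ea.
have [k1 [r1 [k10 Er1 _]]] := good 1 ltr01.
have [a1 [c1 [Ea1 _ _ _ _]]] := key k1 r1 k10 Er1.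
have Nfin : N \is a fin_num.
  by rewrite ge0_fin_numE // (le_lt_trans (Nle _ _ k10 Ea1)) ?ltey.
set n := fine N.
have Nn : N = n%:E by rewrite /n fineK.
have n0 : 0 <= n by exact: fine_ge0.
have bound : forall k r a c : R, 0 < k ->
    I_Phi mu Phi (fun t => k * (y t - x t)) = a%:E ->
    0 <= a -> 0 <= c -> a + c <= r -> p (n, k^-1 * c) <= k^-1 * p (1, r).
  move=> k r a c k0 Ea a0 c0 acr.
  have hn : n <= k^-1 * p (1, a) by rewrite -lee_fin -Nn; exact: Nle.
  have ki : 0 < k^-1 by rewrite invr_gt0.
  have e1 : forall z, k^-1 * p (1, z) = p (k^-1, k^-1 * z).
    by move=> z; have := pZ hp k^-1 1 z; rewrite mulr1 ger0_norm ?ltW // => ->.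
  rewrite e1 in hn; rewrite e1.
  have kc : 0 <= k^-1 * c by rewrite mulr_ge0 // ltW.
  have ka : 0 <= k^-1 * a by rewrite mulr_ge0 // ltW.
  apply: le_trans (_ : p (p (k^-1, k^-1 * a), k^-1 * c) <= _).
    by apply: (pmono0 hp); apply/andP; split.
  apply: le_trans (pkey hp p10 _ _ _ (ltW ki) ka kc) _.
  apply: (pmono0 hp); apply/andP; split.
  - exact: ltW.
  - exact: lexx.
  - exact: addr_ge0.
  - by rewrite -mulrDr; apply: ler_wpM2l => //; exact: ltW.
have Ix0 := Ie_ge0 (mu:=mu) hPhi x.
have pne : p (n, fine (I_Phi mu Phi x)) <= 1.
  apply/ler_addgt0Pr => eta eta0.
  case Ex: (I_Phi mu Phi x) Ix0 => [e| |] // e0 /=.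
  - rewrite lee_fin in e0.
    have eta2 : 0 < eta / 2 by rewrite divr_gt0.
    have [k0 [/andP[k00 k01] Hk0]] := I4 (mu:=mu) hPhi x e (eta/2) mx Ex eta2.
    set eps := Num.min (eta/2) (k0^-1 - 1).
    have eps0 : 0 < eps by rewrite lt_min eta2 subr_gt0 invf_gt1.
    have [k [r [k0' Er hk]]] := good eps eps0.
    have [a [c [Ea Ec a0 c0 acr]]] := key k r k0' Er.
    have B := bound k r a c k0' Ea a0 c0 acr.
    have epsl : eps <= eta / 2 by rewrite ge_min lexx.
    have epsl2 : eps <= k0^-1 - 1 by rewrite ge_min lexx orbT.
    have kc : 0 <= k^-1 * c by rewrite mulr_ge0 // invr_ge0 ltW.
    case: (lerP 1 k) => kge1.
    + have := I2 (mu:=mu) hPhi x k mx kge1; rewrite Ex Ec -EFinM lee_fin => kec.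
      have ekc : e <= k^-1 * c.
        by rewrite -(ler_pM2l k0') mulrA mulfV ?gt_eqF // mul1r.
      have : p (n, e) <= p (n, k^-1 * c).
        by apply: (pmono0 hp); apply/andP; split.
      lra.
    + have r0 : 0 <= r.
        by have := Ie_ge0 (mu:=mu) hPhi (fun t => k * y t); rewrite Er lee_fin.
      have p1r : 1 <= p (1, r).
        rewrite -{1}p10; apply: (pmono0 hp); apply/andP; split => //.
      have kinv : k^-1 < k0^-1.
        have : k^-1 <= k^-1 * p (1, r).
          by rewrite ler_peMr // invr_ge0 ltW.
        lra.
      have kk0 : k0 < k by rewrite -ltf_pV2 // posrE.
      have := I3 (mu:=mu) hPhi x k0 k mx.
      rewrite !gtr0_norm // => /(_ (ltW kk0)); rewrite Ec => Hc.
      have ec : e - eta / 2 <= c by rewrite -lee_fin (le_trans Hk0 Hc).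
      have ki1 : 1 <= k^-1 by rewrite invf_ge1 // ltW.
      have cc : c <= k^-1 * c by rewrite ler_peMl.
      have := pshift hp p01 n e (k^-1 * c) (eta/2) n0 kc e0 (ltW eta2) (le_trans ec cc).
      lra.
  - have [k [r [k0' Er hk]]] := good eta eta0.
    have [a [c [Ea Ec a0 c0 acr]]] := key k r k0' Er.
    have B := bound k r a c k0' Ea a0 c0 acr.
    have kc : 0 <= k^-1 * c by rewrite mulr_ge0 // invr_ge0 ltW.
    have : p (n, 0) <= p (n, k^-1 * c).
      by apply: (pmono0 hp); apply/andP; split.
    lra.
set e := fine (I_Phi mu Phi x) in pne *.
have e0 : 0 <= e := fine_ge0 Ix0.
rewrite Nn lee_fin /delta_m.
have [ez|ene] := eqVneq e 0.
  by move: pne; rewrite ez (pu0 hp p10 n n0) subr0.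
set q := p (n, e).
have epos : 0 < e by rewrite lt_def ene e0.
have qe : e <= q.
  by rewrite /q -{1}(p0v hp p01 e e0); apply: (pmono0 hp); apply/andP; split.
have q0 : 0 < q by apply: lt_le_trans qe.
set S := [set r : R | _].
have lb : has_lbound S.
  exists 0 => r [X [Y [[hX1 hX2] [hXY1 hXY2] hpX hpY ->]]].
  rewrite subr_ge0 -hpY; case: Y hXY1 hXY2 hpY => Y1 Y2 /= hXY1 hXY2 _.
  move: hX1 hX2 => /= hX1 hX2.
  apply: (pmono0 hp); apply/andP; split; rewrite ?subr_ge0 //; lra.
have Sel : S (1 - n / q).
  exists (0, e / q), (n / q, e / q); split.
  - by split => //=; rewrite divr_ge0 // ltW.
  - by split => //=; rewrite divr_ge0 // ltW.
  - rewrite /= (p0v hp p01); last by rewrite divr_ge0 // ltW.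
    by rewrite ler_pdivlMr // ler_piMr.
  - have := pZ hp q^-1 n e; rewrite -/q gtr0_norm ?invr_gt0 // mulVf ?gt_eqF //.
    by rewrite !(mulrC q^-1).
  - by rewrite /= subr0 subrr (pu0 hp p10) // divr_ge0 // ltW.
have := ge_inf lb Sel.
have : n <= n / q by rewrite ler_pdivlMr // ler_piMr.
lra.
Qed.
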